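(* Assume the setup in the context. For $i\in\{n-2,n-1\}$ with $P(T=i)>0$, we have $P(|S|\le1\mid T=i)\ge\frac12$, where $S:=\sum_{j=1}^n v_j\epsilon_j$.
   Context: Let $n\ge4$ and let $v_1,\dots,v_n$ be real numbers with $\sum_{i=1}^n v_i^2\le1$ ordered so that $v_n\ge v_1\ge v_{n-1}\ge v_2\ge v_3\ge\cdots\ge v_{n-2}\ge0$. Let $\epsilon_1,\dots,\epsilon_n$ be independent Rademacher random variables ($\pm1$ with probability $\tfrac12$ each). For $t\in\{1,\dots,n-1\}$ put $X_t:=\sum_{i=1}^t v_i\epsilon_i$. Define the random time $T:=\min\big(\{t\le n-1: |X_t|>1-v_{t+1}\}\cup\{n-1\}\big)$. *)

(* Defs.v *)
(* Rademacher signs are modelled by the uniform probability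
   space of boolean vectors e : {ffun 'I_n -> bool}; e i = true means
   epsilon_{i+1} = +1, false means epsilon_{i+1} = -1. *)
From HB Require Import structures.
From mathcomp Require Import all_boot all_order all_algebra.
Set Implicit Arguments. Unset Strict Implicit. Unset Printing Implicit Defensive.
Import Order.TTheory GRing.Theory Num.Theory.
Local Open Scope ring_scope.

Section Rad.
Variables (R : realFieldType) (n : nat) (v : nat -> R).
(* v is 1-based: v 1, ..., v n are v_1, ..., v_n *)

Definition sgn (b : bool) : R := if b then 1 else -1.

(* X_t = sum_{j=1}^t v_j eps_j  (ordinal i stands for index i+1) *)
Definition Xt (t : nat) (e : {ffun 'I_n -> bool}) : R :=
  \sum_(i < n | (i < t)%N) v i.+1 * sgn (e i).

Definition Ssum (e : {ffun 'I_n -> bool}) : R := Xt n e.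

(* T = min ({t in 1..n-1 : |X_t| > 1 - v_{t+1}} U {n-1}) *)
Definition Tstop (e : {ffun 'I_n -> bool}) : nat :=
  head n.-1 [seq t <- iota 1 n.-1 | 1 - v t.+1 < `|Xt t e| ].

Definition Pr (A : pred {ffun 'I_n -> bool}) : R :=
  #|[set e | A e]|%:R / (2 ^ n)%:R.
End Rad.

(* Main.v *)
Require Import Defs.
From HB Require Import structures.
From mathcomp Require Import all_boot all_order all_algebra.
From mathcomp Require Import zify ring lra.
Set Implicit Arguments. Unset Strict Implicit. Unset Printing Implicit Defensive.
Import Order.TTheory GRing.Theory Num.Theory.
Local Open Scope ring_scope.

Lemma Xt_step (R : realFieldType) n (v : nat -> R) t (ht : (t < n)%N) e :
  Xt v t.+1 e = Xt v t e + v t.+1 * sgn R (e (Ordinal ht)).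
Proof.
rewrite /Xt (bigD1 (Ordinal ht)) //= addrC; congr (_ + _).
apply: eq_bigl => i; rewrite ltnS -val_eqE /= andbC.
by rewrite -ltn_neqAle.
Qed.

Lemma head_filter_le (p : pred nat) k m t :
  (m <= t)%N -> (t < m + k)%N -> p t -> forall d, (head d [seq x <- iota m k | p x] <= t)%N.
Proof.
elim: k m => [|k IH] m hm ht hp d; first by lia.
rewrite /= ; case: ifP => pm //=.
apply: IH => //; last by lia.
case: (eqVneq m t) => [Emt|ne]; [by move: pm; rewrite Emt hp | lia].
Qed.

Section Main.
Variables (R : realFieldType) (m : nat) (v : nat -> R).
Let n := m.+4.
Let lst : 'I_n := Ordinal (ltnSn m.+3).
Definition flip (e : {ffun 'I_n -> bool}) : {ffun 'I_n -> bool} :=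
  [ffun j => if j == lst then ~~ e j else e j].

Lemma flipK : involutive flip.
Proof. by move=> e; apply/ffunP => j; rewrite !ffunE; case: eqP => // _; rewrite negbK. Qed.

Lemma Xt_flip t e : (t <= m.+3)%N -> Xt v t (flip e) = Xt v t e.
Proof.
move=> ht; apply: eq_bigr => j hj; rewrite ffunE.
case: eqP => // Ej; exfalso; move: hj; rewrite Ej /=; lia.
Qed.

Lemma Tstop_flip e : Tstop v (flip e) = Tstop v e.
Proof.
rewrite /Tstop; congr head; apply: eq_in_filter => t; rewrite mem_iota => /andP[_ h].
rewrite Xt_flip //; move: h; rewrite /n /=; lia.
Qed.

Lemma sgn_norm b : `|sgn R b| = 1.
Proof. by case: b; rewrite /sgn ?normrN normr1. Qed.

Lemma key (y b : R) c : `|y| <= 1 + b -> 0 <= b -> b <= 1 ->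
  (`|y + b * sgn R c| <= 1) || (`|y + b * sgn R (~~ c)| <= 1).
Proof.
rewrite ler_norml => /andP[h1 h2] hb0 hb1.
case: c; rewrite /sgn /= !ler_norml; case: (lerP 0 y) => hy.
- apply/orP; right; apply/andP; split; lra.
- apply/orP; left; apply/andP; split; lra.
- apply/orP; left; apply/andP; split; lra.
- apply/orP; right; apply/andP; split; lra.
Qed.

End Main.

Unset Implicit Arguments.

Theorem mainTheorem8 (R : realFieldType) (n : nat) (v : nat -> R) :
  (4 <= n)%N ->
  \sum_(1 <= j < n.+1) v j ^+ 2 <= 1 ->
  v n >= v 1%N -> v 1%N >= v n.-1 -> v n.-1 >= v 2%N ->
  (forall k : nat, (2 <= k)%N -> (k < n.-2)%N -> v k >= v k.+1) ->
  v n.-2 >= 0 ->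
  forall i : nat, (i == n.-2) || (i == n.-1) ->
  0 < @Pr R n (fun e => Tstop v e == i) ->
  @Pr R n (fun e => (`|Ssum v e| <= 1) && (Tstop v e == i))
    / @Pr R n (fun e => Tstop v e == i) >= 1 / 2.
Proof.
case: n => [|[|[|[|m]]]] // _ /=.
move=> hsq hn1 h1 h2 hk h0 i hi.
have chain : forall d, (d <= m)%N -> v (2 + d)%N <= v 2%N.
  elim=> [|d IH] hd //.
  apply: (le_trans _ (IH (ltnW hd))).
  rewrite addnS; apply: hk; lia.
have hv3 : 0 <= v m.+3.
  apply: (le_trans h0); apply: (le_trans _ h2); have := chain m (leqnn m); by rewrite add2n.
have hv4 : 0 <= v m.+4 by lra.
have hv4' : v m.+4 <= 1.
  move: hsq; rewrite big_nat_recr //= => hs.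
  have : 0 <= \sum_(1 <= j < m.+4) v j ^+ 2 by apply: sumr_ge0 => j _; apply: sqr_ge0.
  rewrite expr2 in hs; nra.
have bound : forall e : {ffun 'I_m.+4 -> bool}, Tstop v e == i -> `|Xt v m.+3 e| <= 1 + v m.+4.
  move=> e Te; move: Te; move/eqP => Te.
  have hp : ~~ (1 - v m.+2 < `|Xt v m.+1 e|).
    apply/negP => hp.
    have := @head_filter_le (fun t => 1 - v t.+1 < `|Xt v t e|) m.+3 1 m.+1 isT ltac:(by rewrite add1n ltnS leqW) hp m.+3.
    rewrite -/(Tstop v e) Te; move: hi => /orP[]/eqP -> /=; lia.
  rewrite -leNgt in hp.
  rewrite (@Xt_step R m.+4 v m.+2 ltac:(lia)) (@Xt_step R m.+4 v m.+1 ltac:(lia)).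
  apply: le_trans (ler_normD _ _) _.
  apply: le_trans (lerD (ler_normD _ _) (lexx _)) _.
  rewrite !normrM !sgn_norm !mulr1 (ger0_norm h0) (ger0_norm hv3).
  lra.
have hS : forall e : {ffun 'I_m.+4 -> bool},
    Ssum v e = Xt v m.+3 e + v m.+4 * sgn R (e (Ordinal (ltnSn m.+3))).
  by move=> e; rewrite /Ssum (@Xt_step R m.+4 v m.+3 (ltnSn m.+3)).
set B := [set e : {ffun 'I_m.+4 -> bool} | Tstop v e == i].
set A := [set e : {ffun 'I_m.+4 -> bool} | (`|Ssum v e| <= 1) && (Tstop v e == i)].
have cov : B \subset A :|: (@flip m) @: A.
  apply/subsetP => e; rewrite inE => hB.
  have hfB : Tstop v (@flip m e) == i by rewrite Tstop_flip.
  have := @key R _ _ (e (Ordinal (ltnSn m.+3))) (bound e hB) hv4 hv4'.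
  case/orP => h.
  - by apply/setUP; left; rewrite inE hS h hB.
  - apply/setUP; right; apply/imsetP; exists (@flip m e); last by rewrite flipK.
    rewrite inE hS hfB /flip ffunE eqxx Xt_flip // andbT. exact h.
have hcard : (#|B| <= 2 * #|A|)%N.
  apply: (leq_trans (subset_leq_card cov)).
  apply: (leq_trans (leq_card_setU _ _)).
  rewrite card_imset; last exact: (can_inj (@flipK m)).
  lia.
have -> : Pr R (fun e : {ffun 'I_m.+4 -> bool} => Tstop v e == i) = #|B|%:R / (2^m.+4)%:R by [].
have -> : Pr R (fun e : {ffun 'I_m.+4 -> bool} => (`|Ssum v e| <= 1) && (Tstop v e == i))
   = #|A|%:R / (2^m.+4)%:R by [].
have hP : 0 < (2^m.+4)%:R :> R by rewrite ltr0n expn_gt0.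
move=> hb; have hb' : 0 < #|B|%:R :> R by move: hb; rewrite pmulr_lgt0 // invr_gt0.
have -> : #|A|%:R / (2 ^ m.+4)%:R / (#|B|%:R / (2 ^ m.+4)%:R) = #|A|%:R / #|B|%:R :> R.
  by field; rewrite ?gt_eqF //; apply/andP; split; rewrite gt_eqF.
rewrite ler_pdivlMr //.
have : #|B|%:R <= (2 * #|A|)%:R :> R by rewrite ler_nat.
rewrite natrM; lra.
Qed.
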